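(* Let $\mathcal{G}=(V,\mathcal{E})$ be a plurigraph with $V=[n]$, and let $(V,E)\in\mathcal{E}$ be a contraction-ready pluriedge with contraction-ready composition $(B_1,\dots,B_\ell)$ and with $k\ge 0$ such that $B_i$ is a singleton if and only if $i>k$. Let $r_i=|B_i|-1$. Then $$Y_{\mathcal{G}}=Y_{\mathcal{G}\setminus(V,E)}-Y_{\mathcal{G}/(V,E)}\uparrow^{(r_1,r_2,\dots,r_k)}.$$
   Context: Let $\mathbb{P}=\{1,2,\dots\}$ and work in the ring of formal power series over a field $\mathbb{K}$ of characteristic zero in noncommuting variables $y_1,y_2,\dots$. A graph is a pair $(V,E)$ with $E$ a finite multiset of unordered pairs $uv$ of (not necessarily distinct) elements of $V$ (loops and multiple edges allowed). A plurigraph is a pair $\mathcal{G}=(V,\mathcal{E})$ with $V$ a finite set and $\mathcal{E}$ a finite multiset of graphs $(V,E)$ with vertex set $V$ and $E\neq\emptyset$ (pluriedges). A map $f:V\to\mathbb{P}$ is a proper coloring of $\mathcal{G}$ if for every pluriedge $(V,E)\in\mathcal{E}$ there is an edge $uv\in E$ with $f(u)\neq f(v)$. For $V=[n]$, the chromatic nc-symmetric function is $Y_{\mathcal{G}}=\sum_f y_{f(1)}y_{f(2)}\cdots y_{f(n)}$, summed over proper colorings $f$. Deletion: $\mathcal{G}\setminus(V,E)=(V,\mathcal{E}')$ where $\mathcal{E}'$ is $\mathcal{E}$ with one copy of $(V,E)$ removed. For disjoint $A,B\subseteq[n]$ write $A>B$ if $a>b$ for all $a\in A,b\in B$. A pluriedge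 $(V,E)$ is contraction-ready if the connected components of the graph $(V,E)$ can be ordered as $B_1,\dots,B_\ell$ with $B_i>B_j$ whenever $i<j$ and such that there is $k\ge0$ with $B_i$ a singleton iff $i>k$; $(B_1,\dots,B_\ell)$ is the contraction-ready composition. Contraction: $\mathcal{G}/(V,E)$ is the plurigraph with vertex set $[\ell]$, where all vertices of $B_i$ are identified to the single vertex $\ell-i+1$ (call this map $\phi:[n]\to[\ell]$), and whose pluriedge multiset is $\{([\ell],\{\phi(u)\phi(v): uv\in E'\}) : (V,E')\in\mathcal{E}'\}$ (edges taken as multisets; loops may arise). Induction: for nonnegative integers $r_1,\dots,r_k$ and a monomial $y_{i_1}\cdots y_{i_m}$ with $k\le m$, set $y_{i_1}\cdots y_{i_m}\uparrow^{(r_1,\dots,r_k)}=y_{i_1}\cdots y_{i_{m-k}}\,y_{i_{m-k+1}}^{1+r_k}\cdots y_{i_{m-1}}^{1+r_2}\,y_{i_m}^{1+r_1}$, extended linearly (termwise) to homogeneous series of degree $m$. *)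

(* Defs.v *)
From HB Require Import structures.
From mathcomp Require Import all_boot all_order all_algebra.
Set Implicit Arguments. Unset Strict Implicit. Unset Printing Implicit Defensive.
Import GRing.Theory.
Local Open Scope ring_scope.

(* Conventions:
   - Vertices of a plurigraph on [n] are encoded by the naturals 0..n-1
     (vertex j+1 of the paper is j here).
   - A graph (V,E) is its finite multiset E of unordered pairs, encoded as a
     list of ordered pairs (nat * nat); all notions used are symmetric in the
     two endpoints.  A pluriedge is such a nonempty list, and a plurigraph on
     [n] is the number n together with a list (multiset) of pluriedges.
   - A formal power series in noncommuting variables y_1, y_2, ... over K is
     encoded by its coefficient function on words: the word
     [:: i_1; ...; i_m] (with all i_j > 0) stands for y_{i_1} ... y_{i_m}.  *)

Definition edge := (nat * nat)%type.
Definition pluriedge := seq edge.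
Definition plurigraph := seq pluriedge.

Definition wf_plurigraph (n : nat) (pe : plurigraph) : bool :=
  all (fun E => (E != [::]) && all (fun uv => (uv.1 < n)%N && (uv.2 < n)%N) E) pe.

Definition proper_coloring (pe : plurigraph) (w : seq nat) : bool :=
  all (fun E => has (fun uv => nth 0%N w uv.1 != nth 0%N w uv.2) E) pe.

(* coefficient of the monomial y_{w_1}...y_{w_m} in Y_G, G = ([n], pe) *)
Definition Ychrom (K : fieldType) (n : nat) (pe : plurigraph) (w : seq nat) : K :=
  ((size w == n) && all (fun c => (0 < c)%N) w && proper_coloring pe w)%:R.

Definition delete (pe : plurigraph) (E : pluriedge) : plurigraph := rem E pe.

Definition adjE (n : nat) (E : pluriedge) : rel 'I_n :=
  fun u v => ((val u, val v) \in E) || ((val v, val u) \in E).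

Definition component (n : nat) (E : pluriedge) (x : 'I_n) : {set 'I_n} :=
  [set y | connect (adjE E) x y].

(* Bs is an enumeration (without repetition) of the connected components of
   ([n],E), ordered so that B_i > B_j for i < j, and with exactly the blocks
   of (0-based) index >= k being singletons. *)
Definition contraction_ready_composition (n : nat) (E : pluriedge)
    (Bs : seq {set 'I_n}) (k : nat) : Prop :=
  [/\ uniq Bs,
      (forall X, X \in Bs <-> exists x, X = component E x),
      (forall i j, (i < j)%N -> (j < size Bs)%N ->
         forall a b : 'I_n, a \in nth set0 Bs i -> b \in nth set0 Bs j ->
         (val b < val a)%N),
      (k <= size Bs)%N &
      (forall i, (i < size Bs)%N -> (#|nth set0 Bs i| == 1%N) = (k <= i)%N)].

(* the map phi : [n] -> [l] identifying B_i (1-based) to l - i + 1;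
   0-based: block index i goes to l - 1 - i *)
Definition in_block (n : nat) (v : nat) (B : {set 'I_n}) : bool :=
  [exists x in B, val x == v].

Definition phi (n : nat) (Bs : seq {set 'I_n}) (v : nat) : nat :=
  ((size Bs).-1 - find (in_block v) Bs)%N.

Definition contract (n : nat) (pe : plurigraph) (E : pluriedge)
    (Bs : seq {set 'I_n}) : plurigraph :=
  [seq [seq (phi Bs uv.1, phi Bs uv.2) | uv <- E'] | E' <- rem E pe].

(* Induction on monomials: y_{i_1}..y_{i_m} ^(r_1..r_k) =
   y_{i_1}..y_{i_{m-k}} y_{i_{m-k+1}}^{1+r_k} ... y_{i_m}^{1+r_1} *)
Definition up_word (r : seq nat) (w : seq nat) : seq nat :=
  take (size w - size r) w ++
  flatten [seq nseq p.2.+1 p.1 | p <- zip (drop (size w - size r) w) (rev r)].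

Fixpoint words (m : nat) (s : seq nat) : seq (seq nat) :=
  if m is m'.+1 then [seq x :: w | x <- s, w <- words m' s] else [:: [::]].

(* termwise-linear extension of the induction to a homogeneous series S of
   degree m: the coefficient of u in S^(r) is the sum of the coefficients of
   S at all words w of length m with w^(r) = u (any such w only uses letters
   of u, so it suffices to range over words on the letters of u). *)
Definition up_series (K : fieldType) (m : nat) (r : seq nat)
    (S : seq nat -> K) (u : seq nat) : K :=
  \sum_(w <- words m (undup u) | up_word r w == u) S w.

(* Main.v *)
Require Import Defs.
From HB Require Import structures.
From mathcomp Require Import all_boot all_order all_algebra zify.
Import GRing.Theory.


Lemma mem_words (m : nat) (s w : seq nat) :
  (w \in words m s) = (size w == m) && all (mem s) w.
Proof.
elim: m w => [|m IH] [|x w] //=.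
- by apply/allpairsP => -[[a b] /= []].
- apply/idP/idP.
    case/allpairsP => -[a b] /= [Ha Hb [-> ->]].
    by rewrite eqSS Ha /= -IH.
  case/and3P => Hs Hx Hw; apply/allpairsP; exists (x, w); split => //=.
  by rewrite IH Hw -(eqSS) Hs.
Qed.

Lemma uniq_words (m : nat) (s : seq nat) : uniq s -> uniq (words m s).
Proof.
move=> us; elim: m => [|m IH] //=.
apply: allpairs_uniq => //.
by move=> [a b] [c d] _ _ /= [-> ->].
Qed.


Set Implicit Arguments. Unset Strict Implicit.

Lemma count_iota_card (n : nat) (P : pred nat) (B : {set 'I_n}) :
  (forall x : 'I_n, P (val x) = (x \in B)) -> count P (iota 0 n) = #|B|.
Proof.
move=> HP; rewrite cardE size_filter -val_enum_ord count_map.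
rewrite enumT; apply: eq_count => x /=; exact: HP.
Qed.

Lemma in_blockE (n : nat) (x : 'I_n) (B : {set 'I_n}) :
  in_block (val x) B = (x \in B).
Proof.
apply/existsP/idP => [[y /andP[Hy /eqP Hv]]|Hx].
  by have -> : x = y by apply: val_inj.
by exists x; rewrite Hx eqxx.
Qed.

Lemma crc_cover n (E : pluriedge) (Bs : seq {set 'I_n}) k (x : 'I_n) :
  contraction_ready_composition E Bs k ->
  exists2 i, (i < size Bs)%N & x \in nth set0 Bs i.
Proof.
case=> _ H2 _ _ _.
have Hc : component E x \in Bs by apply/H2; exists x.
exists (index (component E x) Bs); first by rewrite index_mem.
by rewrite nth_index // inE connect0.
Qed.

Lemma crc_disj n (E : pluriedge) (Bs : seq {set 'I_n}) k (x : 'I_n) i j :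
  contraction_ready_composition E Bs k ->
  (i < size Bs)%N -> (j < size Bs)%N ->
  x \in nth set0 Bs i -> x \in nth set0 Bs j -> i = j.
Proof.
case=> _ _ H3 _ _ Hi Hj Hxi Hxj.
case: (ltngtP i j) => // Hij.
  by have := H3 i j Hij Hj x x Hxi Hxj; rewrite ltnn.
by have := H3 j i Hij Hi x x Hxj Hxi; rewrite ltnn.
Qed.

Lemma crc_find n (E : pluriedge) (Bs : seq {set 'I_n}) k (x : 'I_n) :
  contraction_ready_composition E Bs k ->
  (find (in_block (val x)) Bs < size Bs)%N /\
  x \in nth set0 Bs (find (in_block (val x)) Bs).
Proof.
move=> H; have [i Hi Hx] := crc_cover x H.
have Hh : has (in_block (val x)) Bs.
  by apply/(has_nthP set0); exists i => //; rewrite in_blockE.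
split; first by rewrite -has_find.
by rewrite -in_blockE; apply: nth_find.
Qed.

Lemma crc_findE n (E : pluriedge) (Bs : seq {set 'I_n}) k (x : 'I_n) i :
  contraction_ready_composition E Bs k -> (i < size Bs)%N ->
  (find (in_block (val x)) Bs == i) = (x \in nth set0 Bs i).
Proof.
move=> H Hi; have [Hf Hx] := crc_find x H.
apply/eqP/idP => [<-//|Hxi].
exact: (crc_disj H Hf Hi Hx Hxi).
Qed.

Lemma crc_nonempty n (E : pluriedge) (Bs : seq {set 'I_n}) k i :
  contraction_ready_composition E Bs k -> (i < size Bs)%N ->
  exists x : 'I_n, x \in nth set0 Bs i.
Proof.
move=> H Hi; have := mem_nth set0 Hi; case: H => _ H2 _ _ _.
case/H2 => x ->; exists x; by rewrite inE connect0.
Qed.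

Lemma crc_connect n (E : pluriedge) (Bs : seq {set 'I_n}) k (x y : 'I_n) :
  contraction_ready_composition E Bs k ->
  connect (adjE E) x y ->
  find (in_block (val x)) Bs = find (in_block (val y)) Bs.
Proof.
move=> H Hxy; have [Hf Hx] := crc_find x H.
have := mem_nth set0 Hf; case: (H) => _ H2 _ _ _.
case/H2 => z Hz; move: Hx; rewrite Hz inE => Hzx.
apply/esym/eqP; rewrite (crc_findE _ H Hf) Hz inE.
exact: connect_trans Hzx Hxy.
Qed.

Lemma adjE_sym n (E : pluriedge) : symmetric (@adjE n E).
Proof. by move=> x y; rewrite /adjE orbC. Qed.

Lemma crc_connect_rev n (E : pluriedge) (Bs : seq {set 'I_n}) k (x y : 'I_n) :
  contraction_ready_composition E Bs k ->
  find (in_block (val x)) Bs = find (in_block (val y)) Bs ->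
  connect (adjE E) x y.
Proof.
move=> H Hxy; have [Hf Hx] := crc_find x H.
have [_ Hy] := crc_find y H; rewrite -Hxy in Hy.
have := mem_nth set0 Hf; case: (H) => _ H2 _ _ _.
case/H2 => z Hz; move: Hx Hy; rewrite Hz !inE => Hzx Hzy.
apply: connect_trans Hzy; rewrite (sym_connect_sym (@adjE_sym n E)); exact: Hzx.
Qed.


Lemma phi_lt n (E : pluriedge) (Bs : seq {set 'I_n}) k v :
  contraction_ready_composition E Bs k -> (v < n)%N -> (phi Bs v < size Bs)%N.
Proof.
move=> H Hv; have [Hf _] := crc_find (Ordinal Hv) H.
rewrite /phi /=; lia.
Qed.

Lemma phi_eq n (E : pluriedge) (Bs : seq {set 'I_n}) k (x : 'I_n) j :
  contraction_ready_composition E Bs k -> (j < size Bs)%N ->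
  (phi Bs (val x) == j) = (x \in nth set0 Bs ((size Bs).-1 - j)).
Proof.
move=> H Hj; have [Hf _] := crc_find x H.
have Hj2 : ((size Bs).-1 - j < size Bs)%N by lia.
rewrite -(crc_findE x H Hj2) /phi.
have Hf2 : (find (in_block (val x)) Bs < size Bs)%N by case: (crc_find x H).
rewrite -subn1 in Hj2 *; apply/eqP/eqP; lia.
Qed.

Lemma phi_mono n (E : pluriedge) (Bs : seq {set 'I_n}) k v w :
  contraction_ready_composition E Bs k -> (v <= w)%N -> (w < n)%N ->
  (phi Bs v <= phi Bs w)%N.
Proof.
move=> H Hvw Hw; have Hv : (v < n)%N by lia.
have [Hfv Hxv] := crc_find (Ordinal Hv) H.
have [Hfw Hxw] := crc_find (Ordinal Hw) H.
rewrite /phi /=; move: Hfv Hxv Hfw Hxw => /=.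
set i := find _ Bs; set j := find _ Bs => Hi Hxi Hj Hxj.
case: (ltnP i j) => Hij; last by lia.
case: H => _ _ H3 _ _.
have := H3 i j Hij Hj _ _ Hxi Hxj => /=; lia.
Qed.

Definition bsz n (Bs : seq {set 'I_n}) j := #|nth set0 Bs ((size Bs).-1 - j)|.

Lemma sumn_delta (f : nat -> nat) j m l :
  sumn [seq (i == j) * f i | i <- iota m l]%N =
  if (m <= j < m + l)%N then f j else 0%N.
Proof.
elim: l m => [|l IH] m /=; first by case: ifP => //; lia.
rewrite IH; case: (eqVneq m j) => [->|Hmj].
  by rewrite mul1n; case: ifP => [|_]; [lia|rewrite leqnn /=; case: ifP; lia].
rewrite mul0n add0n; case: ifP; case: ifP => //; lia.
Qed.

Lemma sorted_flat_nseq (f : nat -> nat) m l :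
  sorted leq (flatten [seq nseq (f i) i | i <- iota m l]).
Proof.
rewrite sorted_pairwise; last exact: leq_trans.
elim: l m => [|l IH] m //=.
rewrite pairwise_cat IH andbT; apply/andP; split.
  apply/allrelP => x y /nseqP[-> _] /flattenP[s /mapP[i Hi ->]] /nseqP[-> _].
  by move: Hi; rewrite mem_iota; lia.
by elim: (f m) => //= a ->; rewrite andbT all_nseq leqnn orbT.
Qed.

Lemma sorted_iota_step (r : rel nat) m l :
  (forall i, (m <= i)%N -> (i.+1 < m + l)%N -> r i i.+1) -> sorted r (iota m l).
Proof.
elim: l m => [|l IH] m //= Hr.
case: l IH Hr => [|l] IH Hr //=.
rewrite (Hr m) //=; last by lia.
by have := IH m.+1; rewrite /=; apply => i Hi Hi2; apply: Hr; lia.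
Qed.

Lemma blockA n (E : pluriedge) (Bs : seq {set 'I_n}) k :
  contraction_ready_composition E Bs k ->
  [seq phi Bs v | v <- iota 0 n] =
  flatten [seq nseq (bsz Bs j) j | j <- iota 0 (size Bs)].
Proof.
move=> H; apply: (sorted_eq leq_trans anti_leq).
- rewrite sorted_map; apply: sorted_iota_step => i _ Hi /=.
  by apply: (phi_mono H); lia.
- exact: sorted_flat_nseq.
apply/allP => j _ /=; apply/eqP.
rewrite count_flatten -map_comp.
have Hfg : (count_mem j \o (fun j0 => nseq (bsz Bs j0) j0)) =1 (fun i => ((i == j) * bsz Bs i)%N).
  by move=> i; rewrite /= count_nseq.
rewrite (eq_map Hfg).
rewrite sumn_delta count_map add0n.
case: ifP => Hj.
  apply: count_iota_card => x /=.
  by apply: (phi_eq x H); case/andP: Hj.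
apply/eqP; rewrite -leqn0 leqNgt -has_count; apply/hasP => -[v].
rewrite mem_iota /= => Hv /eqP Hpv.
have := phi_lt H Hv; rewrite Hpv; lia.
Qed.


Lemma upB n (E : pluriedge) (Bs : seq {set 'I_n}) k (g : seq nat) :
  contraction_ready_composition E Bs k -> size g = size Bs ->
  up_word [seq (#|nth set0 Bs i| - 1)%N | i <- iota 0 k] g =
  flatten [seq nseq (bsz Bs j) (nth 0%N g j) | j <- iota 0 (size Bs)].
Proof.
move=> H Hg; have Hk : (k <= size Bs)%N by case: H.
have H5 : forall i, (i < size Bs)%N -> (#|nth set0 Bs i| == 1%N) = (k <= i)%N by case: H.
rewrite /up_word size_map size_iota Hg.
have -> : iota 0 (size Bs) = iota 0 (size Bs - k) ++ iota (size Bs - k) k.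
  by rewrite -iotaD subnK.
rewrite map_cat flatten_cat; congr (_ ++ _).
  have -> : [seq nseq (bsz Bs j) (nth 0%N g j) | j <- iota 0 (size Bs - k)] =
      [seq [:: x] | x <- [seq nth 0%N g j | j <- iota 0 (size Bs - k)]].
    rewrite -map_comp; apply/eq_in_map => j; rewrite mem_iota => Hj; rewrite /= /bsz.
    have Hi : ((size Bs).-1 - j < size Bs)%N by lia.
    have := H5 _ Hi; rewrite -subn1 in Hi *; have -> : (k <= size Bs - 1 - j)%N by lia.
    by move/eqP => ->.
  rewrite flatten_seq1.
  apply: (@eq_from_nth _ 0%N).
    by rewrite size_map size_iota size_takel // Hg leq_subr.
  move=> i; rewrite size_takel ?Hg ?leq_subr // => Hi.
  by rewrite (nth_map 0%N) ?size_iota // nth_iota // nth_take.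
congr flatten; apply: (@eq_from_nth _ [::]).
  rewrite !size_map size_zip size_drop size_rev size_map !size_iota Hg; lia.
move=> t; rewrite !size_map size_zip size_drop size_rev size_map !size_iota Hg => Ht.
have Htk : (t < k)%N by lia.
rewrite (nth_map (0%N, 0%N)); last first.
  by rewrite size_zip size_drop size_rev size_map !size_iota Hg; lia.
rewrite nth_zip; last by rewrite size_drop size_rev size_map size_iota Hg; lia.
rewrite (nth_map 0%N) ?size_iota // nth_iota // nth_drop nth_rev ?size_map ?size_iota //.
rewrite (nth_map 0%N) ?size_iota; last by lia.
rewrite nth_iota; last by lia.
rewrite /= /bsz add0n.
have -> : ((size Bs).-1 - (size Bs - k + t) = k - t.+1)%N by rewrite -subn1; lia.
have Hb : (k - t.+1 < size Bs)%N by lia.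
have [x Hx] := crc_nonempty H Hb.
have : (0 < #|nth set0 Bs (k - t.+1)|)%N by apply/card_gt0P; exists x.
by move=> Hpos; rewrite -(prednK Hpos) /= subn1.
Qed.

Lemma keyC n (E : pluriedge) (Bs : seq {set 'I_n}) k (g : seq nat) :
  contraction_ready_composition E Bs k -> size g = size Bs ->
  up_word [seq (#|nth set0 Bs i| - 1)%N | i <- iota 0 k] g =
  [seq nth 0%N g (phi Bs v) | v <- iota 0 n].
Proof.
move=> H Hg; rewrite (upB H Hg) map_comp (blockA H) map_flatten -map_comp.
by congr flatten; apply: eq_map => j /=; rewrite map_nseq.
Qed.


Definition hasdiff (E : pluriedge) (u : seq nat) :=
  has (fun uv => nth 0%N u uv.1 != nth 0%N u uv.2) E.

Definition rep n (Bs : seq {set 'I_n}) j :=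
  nth 0%N [seq v <- iota 0 n | phi Bs v == j] 0.

Lemma repP n (E : pluriedge) (Bs : seq {set 'I_n}) k j :
  contraction_ready_composition E Bs k -> (j < size Bs)%N ->
  (rep Bs j < n)%N /\ phi Bs (rep Bs j) = j.
Proof.
move=> H Hj.
have Hi : ((size Bs).-1 - j < size Bs)%N by rewrite -subn1; lia.
have [x Hx] := crc_nonempty H Hi.
have Hxf : val x \in [seq v <- iota 0 n | phi Bs v == j].
  by rewrite mem_filter (phi_eq x H Hj) Hx mem_iota /=.
have Hs : (0 < size [seq v <- iota 0 n | phi Bs v == j])%N.
  by case: [seq v <- _ | _] Hxf.
have := mem_nth 0%N Hs; rewrite -/(rep Bs j) mem_filter mem_iota /=.
by case/andP => /eqP -> ->.
Qed.

Lemma phi_find n (E : pluriedge) (Bs : seq {set 'I_n}) k v w :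
  contraction_ready_composition E Bs k -> (v < n)%N -> (w < n)%N ->
  phi Bs v = phi Bs w -> find (in_block v) Bs = find (in_block w) Bs.
Proof.
move=> H Hv Hw; have [Hfv _] := crc_find (Ordinal Hv) H.
have [Hfw _] := crc_find (Ordinal Hw) H.
rewrite /phi -subn1 /=; move: Hfv Hfw => /= Hfv Hfw; lia.
Qed.

Lemma edge_bound n pe E' (uv : edge) :
  wf_plurigraph n pe -> E' \in pe -> uv \in E' -> (uv.1 < n)%N /\ (uv.2 < n)%N.
Proof.
move=> /allP Hwf HE' Huv; have /andP[_ /allP Hall] := Hwf _ HE'.
by have /andP[] := Hall _ Huv.
Qed.

Lemma P2 n pe (E : pluriedge) (Bs : seq {set 'I_n}) k g :
  wf_plurigraph n pe ->
  contraction_ready_composition E Bs k -> size g = size Bs ->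
  proper_coloring (contract pe E Bs) g =
  proper_coloring (rem E pe) (up_word [seq (#|nth set0 Bs i| - 1)%N | i <- iota 0 k] g).
Proof.
move=> Hwf H Hg; rewrite /proper_coloring /contract all_map (keyC H Hg).
apply: eq_in_all => E' HE' /=; rewrite has_map; apply: eq_in_has => -[a b] Hab /=.
have HE'' : E' \in pe by move: HE'; apply: mem_rem.
have [/= Ha Hb] := edge_bound Hwf HE'' Hab.
by rewrite !(nth_map 0%N) ?size_iota // !nth_iota.
Qed.

Lemma P4 n pe (E : pluriedge) (Bs : seq {set 'I_n}) k g :
  wf_plurigraph n pe -> E \in pe ->
  contraction_ready_composition E Bs k -> size g = size Bs ->
  ~~ hasdiff E (up_word [seq (#|nth set0 Bs i| - 1)%N | i <- iota 0 k] g).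
Proof.
move=> Hwf HE H Hg; rewrite (keyC H Hg); apply/hasPn => -[a b] Hab /=.
have [/= Ha Hb] := edge_bound Hwf HE Hab.
rewrite negbK !(nth_map 0%N) ?size_iota // !nth_iota //; apply/eqP.
rewrite /phi; congr (nth _ _ (_ - _)).
have := crc_connect (x := Ordinal Ha) (y := Ordinal Hb) H; apply.
by apply: connect1; rewrite /adjE /= Hab.
Qed.

Lemma const_conn n (E : pluriedge) (u : seq nat) (x y : 'I_n) :
  ~~ hasdiff E u -> connect (adjE E) x y -> nth 0%N u x = nth 0%N u y.
Proof.
move=> /hasPn Hd /connectP[p Hp ->]; elim: p x Hp => [|z p IH] x //= /andP[Hxz Hp].
rewrite -(IH z Hp); move: Hxz; rewrite /adjE => /orP[] Hin.
  by have := Hd _ Hin; rewrite negbK => /eqP.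
by have := Hd _ Hin; rewrite negbK => /eqP.
Qed.


Lemma P6 n (E : pluriedge) (Bs : seq {set 'I_n}) k g j :
  contraction_ready_composition E Bs k -> size g = size Bs -> (j < size Bs)%N ->
  nth 0%N (up_word [seq (#|nth set0 Bs i| - 1)%N | i <- iota 0 k] g) (rep Bs j)
  = nth 0%N g j.
Proof.
move=> H Hg Hj; have [Hr Hp] := repP H Hj.
by rewrite (keyC H Hg) (nth_map 0%N) ?size_iota // nth_iota // add0n Hp.
Qed.

Lemma P6u n (E : pluriedge) (Bs : seq {set 'I_n}) k g1 g2 :
  contraction_ready_composition E Bs k -> size g1 = size Bs -> size g2 = size Bs ->
  up_word [seq (#|nth set0 Bs i| - 1)%N | i <- iota 0 k] g1 =
  up_word [seq (#|nth set0 Bs i| - 1)%N | i <- iota 0 k] g2 -> g1 = g2.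
Proof.
move=> H H1 H2 Heq; apply: (@eq_from_nth _ 0%N); first by rewrite H1 H2.
move=> j; rewrite H1 => Hj.
by rewrite -(P6 H H1 Hj) -(P6 H H2 Hj) Heq.
Qed.

Lemma P5 n (E : pluriedge) (Bs : seq {set 'I_n}) k u :
  contraction_ready_composition E Bs k -> size u = n -> ~~ hasdiff E u ->
  exists g, [/\ size g = size Bs,
    up_word [seq (#|nth set0 Bs i| - 1)%N | i <- iota 0 k] g = u &
    all (mem u) g].
Proof.
move=> H Hsu Hd.
exists [seq nth 0%N u (rep Bs j) | j <- iota 0 (size Bs)].
have Hg : size [seq nth 0%N u (rep Bs j) | j <- iota 0 (size Bs)] = size Bs.
  by rewrite size_map size_iota.
split => //.
  rewrite (keyC H Hg) -[RHS](mkseq_nth 0%N u) Hsu /mkseq.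
  apply/eq_in_map => v; rewrite mem_iota add0n => /andP[_ Hv].
  have Hpl := phi_lt H Hv.
  rewrite (nth_map 0%N) ?size_iota // nth_iota //.
  have [Hr Hp] := repP H Hpl.
  have := const_conn (x := Ordinal Hr) (y := Ordinal Hv) Hd; apply.
  apply: (crc_connect_rev H) => /=.
  exact: (phi_find H Hr Hv Hp).
apply/allP => c /mapP[j]; rewrite mem_iota add0n => /andP[_ Hj] ->.
have [Hr _] := repP H Hj.
by apply: mem_nth; rewrite Hsu.
Qed.


Unset Implicit Arguments. Set Strict Implicit.
Local Open Scope ring_scope.

Theorem theorem2p4 (K : fieldType) (Kchar0 : [pchar K] =i pred0)
    (n : nat) (pe : plurigraph) (E : pluriedge)
    (Bs : seq {set 'I_n}) (k : nat) :
  wf_plurigraph n pe ->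
  E \in pe ->
  contraction_ready_composition E Bs k ->
  let r := [seq (#|nth set0 Bs i| - 1)%N | i <- iota 0 k] in
  forall u : seq nat,
    Ychrom K n pe u =
    Ychrom K n (delete pe E) u
    - up_series (size Bs) r (Ychrom K (size Bs) (contract pe E Bs)) u.
Proof.
move=> Hwf HE H r u.
have P1 : proper_coloring pe u = hasdiff E u && proper_coloring (rem E pe) u.
  by rewrite /proper_coloring (perm_all _ (perm_to_rem HE)).
rewrite /Ychrom /delete P1 /up_series.
case Hc: [&& size u == n, all (fun c => (0 < c)%N) u & ~~ hasdiff E u].
  move: Hc => /and3P[/eqP Hsu Hpu Hd].
  have [g [Hg Hup Hgu]] := P5 H Hsu Hd.
  have Hgw : g \in words (size Bs) (undup u).
    rewrite mem_words Hg eqxx /=; apply/allP => c Hc.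
    by rewrite /= mem_undup; exact: (allP Hgu).
  rewrite big_mkcond (bigD1_seq g Hgw (uniq_words (size Bs) (undup u) (undup_uniq u))) /=.
  rewrite -/r Hup eqxx big_seq_cond big1 ?addr0; last first.
    move=> w /andP[Hw Hne]; case: eqP => // Hup'.
    move: Hw; rewrite mem_words => /andP[/eqP Hsw _].
    by move: Hne; rewrite (P6u H Hsw Hg (etrans Hup' (esym Hup))) eqxx.
  have Hpg : all (fun c => (0 < c)%N) g.
    by apply/allP => c /(allP Hgu) Hc; exact: (allP Hpu).
  rewrite Hg eqxx Hpg /= (P2 Hwf H Hg) -/r Hup Hsu eqxx Hpu (negbTE Hd) /=.
  by rewrite subrr.
rewrite big_seq_cond big1 ?subr0; last first.
  move=> w /andP[Hw /eqP Hup].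
  move: Hw; rewrite mem_words => /andP[/eqP Hsw _].
  case Hpw: (all (fun c => (0 < c)%N) w); last by rewrite andbF.
  exfalso; move: Hc; rewrite -Hup.
  have -> : size (up_word r w) == n by rewrite /r (keyC H Hsw) size_map size_iota.
  have -> : all (fun c => (0 < c)%N) (up_word r w).
    rewrite /r (keyC H Hsw); apply/allP => c /mapP[v]; rewrite mem_iota => /andP[_ Hv] ->.
    apply: (allP Hpw); apply: mem_nth; rewrite Hsw; exact: (phi_lt H Hv).
  by rewrite /r (P4 Hwf HE H Hsw).
move: Hc; case: (size u == n); case: (all _ u); case: (hasdiff E u) => //=.
Qed.
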